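(* Let $\mathcal I$ be an ideal of a Poisson $n$-Lie algebra $\mathcal P$ of arbitrary dimension. Define $\mathcal I^{1)}=\mathcal I$, $\mathcal I^{k+1)}=\mathcal I^{k)}\cdot\mathcal I$, and $\mathcal I^{(1}=\mathcal I$, $\mathcal I^{(k+1}=[\mathcal I^{(k},\mathcal I,\mathcal P,\dots,\mathcal P]$ for $k\ge1$. Then for every $k\ge1$, $$\mathcal I^k\subseteq\sum_{r_1+\cdots+r_t=k}\mathcal I^{r_1)}\cdot\prod_{i=2}^t\mathcal I^{(r_i},$$ where the sum is over all $t\ge1$ and nonnegative integers $r_1,\dots,r_t$ with $r_1+\cdots+r_t=k$, and factors $\mathcal I^{0)}$, $\mathcal I^{(0}$ are understood to act trivially (multiplication by them leaves the other factor unchanged).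
   Context: A Poisson $n$-Lie algebra is a commutative associative algebra $(\mathcal P,\cdot)$ with an $n$-linear skew-symmetric bracket satisfying the fundamental identity $[x_1,\dots,x_{n-1},[y_1,\dots,y_n]]=\sum_{i=1}^n[y_1,\dots,[x_1,\dots,x_{n-1},y_i],\dots,y_n]$ and the Leibniz rule $[y\cdot z,x_2,\dots,x_n]=y\cdot[z,x_2,\dots,x_n]+z\cdot[y,x_2,\dots,x_n]$. For subspaces, products and brackets denote linear spans. An ideal $\mathcal I$ satisfies $\mathcal P\cdot\mathcal I\subseteq\mathcal I$, $[\mathcal I,\mathcal P,\dots,\mathcal P]\subseteq\mathcal I$. Lower central series: $\mathcal I^1=\mathcal I$, $\mathcal I^{k+1}=[\mathcal I^k,\mathcal I,\mathcal P,\dots,\mathcal P]+\mathcal I^k\cdot\mathcal I$. *)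

(* Defs.v *)
From HB Require Import structures.
From mathcomp Require Import all_boot all_order all_algebra all_fingroup.
Set Implicit Arguments. Unset Strict Implicit. Unset Printing Implicit Defensive.
Import GRing.Theory.
Local Open Scope ring_scope.

Section PoissonNLie.
Variables (F : fieldType) (V : lmodType F) (n : nat).
Variable (mul : V -> V -> V) (br : ('I_n -> V) -> V).

Definition upd (x : 'I_n -> V) (j : 'I_n) (v : V) : 'I_n -> V :=
  fun i => if i == j then v else x i.

Record is_poisson_nlie : Prop := {
  mul_linl : forall a u v w, mul (a *: u + v) w = a *: mul u w + mul v w;
  mul_comm : forall u v, mul u v = mul v u;
  mul_assoc : forall u v w, mul u (mul v w) = mul (mul u v) w;
  br_multilinear : forall (x : 'I_n -> V) j a u v,
    br (upd x j (a *: u + v)) = a *: br (upd x j u) + br (upd x j v);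
  br_skew : forall (x : 'I_n -> V) (s : 'S_n),
    br (fun i => x (s i)) = (-1) ^+ (odd_perm s) *: br x;
  br_fundamental : forall (x y : 'I_n -> V) (j : 'I_n), nat_of_ord j = n.-1 ->
    br (upd x j (br y)) = \sum_(i < n) br (upd y i (br (upd x j (y i))));
  br_leibniz : forall (x : 'I_n -> V) (j : 'I_n) (y z : V), nat_of_ord j = 0%N ->
    br (upd x j (mul y z)) = mul y (br (upd x j z)) + mul z (br (upd x j y))
}.

Definition subspace (S : V -> Prop) : Prop :=
  S 0 /\ forall a u v, S u -> S v -> S (a *: u + v).

Definition span (X : V -> Prop) : V -> Prop :=
  fun v => forall S, subspace S -> (forall x, X x -> S x) -> S v.

Definition sumS (A B : V -> Prop) : V -> Prop := span (fun v => A v \/ B v).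

Definition prodS (A B : V -> Prop) : V -> Prop :=
  span (fun v => exists a b, A a /\ B b /\ v = mul a b).

Definition brS (A B : V -> Prop) : V -> Prop :=
  span (fun v => exists x : 'I_n -> V,
    (forall i : 'I_n, nat_of_ord i = 0%N -> A (x i)) /\
    (forall i : 'I_n, nat_of_ord i = 1%N -> B (x i)) /\ v = br x).

Definition ideal (I : V -> Prop) : Prop :=
  subspace I /\ (forall a b, I b -> I (mul a b)) /\
  (forall (x : 'I_n -> V) (j : 'I_n), nat_of_ord j = 0%N -> I (x j) -> I (br x)).

(* lower central series: lcs I k = I^k for k >= 1 (lcs I 0 = P, unused) *)
Fixpoint lcs (I : V -> Prop) (k : nat) : V -> Prop :=
  match k with
  | 0 => fun _ => True
  | k'.+1 => if k' is 0 then I else sumS (brS (lcs I k') I) (prodS (lcs I k') I)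
  end.

(* I^{k)} : I^{1)} = I, I^{k+1)} = I^{k)} . I  (k >= 1; value at 0 unused) *)
Fixpoint powA (I : V -> Prop) (k : nat) : V -> Prop :=
  match k with
  | 0 => fun _ => True
  | k'.+1 => if k' is 0 then I else prodS (powA I k') I
  end.

Fixpoint powB (I : V -> Prop) (k : nat) : V -> Prop :=
  match k with
  | 0 => fun _ => True
  | k'.+1 => if k' is 0 then I else brS (powB I k') I
  end.

(* multiplication where None is the trivially acting factor (I^{0)}, I^{(0}) *)
Definition mulopt (A B : option (V -> Prop)) : option (V -> Prop) :=
  match A, B with
  | None, _ => B
  | Some _, None => A
  | Some A', Some B' => Some (prodS A' B')
  end.

(* I^{r1)} . prod_{i>=2} I^{(r_i}  for r = r1 :: rs *)
Definition term (I : V -> Prop) (r1 : nat) (rs : seq nat) : option (V -> Prop) :=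
  foldl (fun acc ri => mulopt acc (if ri == 0%N then None else Some (powB I ri)))
        (if r1 == 0%N then None else Some (powA I r1)) rs.

Definition rhs (I : V -> Prop) (k : nat) : V -> Prop :=
  span (fun v => exists (r1 : nat) (rs : seq nat) (S : V -> Prop),
           (r1 + sumn rs)%N = k /\ term I r1 rs = Some S /\ S v).

End PoissonNLie.

(* Main.v *)
Require Import Defs.
From mathcomp Require Import all_boot all_order all_algebra all_fingroup.
From Stdlib Require Import FunctionalExtensionality.
Require Import Defs.
Set Implicit Arguments. Unset Strict Implicit. Unset Printing Implicit Defensive.
Import GRing.Theory.
Local Open Scope ring_scope.

Section Aux.
Variables (F : fieldType) (V : lmodType F) (n : nat) (mul : V -> V -> V)
  (br : ('I_n -> V) -> V).
Hypothesis hn : (2 <= n)%N.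
Hypothesis HP : is_poisson_nlie mul br.
Variable I : V -> Prop.

Lemma span_sub (X : V -> Prop) v : X v -> span X v.
Proof. by move=> Xv S _ h; apply: h. Qed.

Lemma span_subspace (X : V -> Prop) : subspace (span X).
Proof.
split; first by move=> S [S0 _] _.
move=> a u w hu hw S hS h; case: (hS) => _ cl; apply: cl; [exact: hu | exact: hw].
Qed.

Lemma span_ind (X S : V -> Prop) : subspace S -> (forall x, X x -> S x) ->
  forall v, span X v -> S v.
Proof. by move=> hS h v hv; apply: hv. Qed.

Lemma sub_add (S : V -> Prop) u w : subspace S -> S u -> S w -> S (u + w).
Proof. by move=> [_ cl] hu hw; rewrite -[u]scale1r; apply: cl. Qed.

Definition i0 : 'I_n := Ordinal (leq_trans (isT : (0 < 2)%N) hn).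
Definition i1 : 'I_n := Ordinal hn.

Lemma br_upd0 x j : br (upd x j 0) = 0.
Proof.
have := br_multilinear HP x j (-1) 0 0.
by rewrite scaler0 addr0 scaleN1r addNr.
Qed.

Lemma brQ (R : V -> Prop) x j : subspace R -> subspace (fun v => R (br (upd x j v))).
Proof.
move=> [R0 cl]; split; first by rewrite br_upd0.
by move=> a u v hu hv; rewrite (br_multilinear HP); apply: cl.
Qed.

Lemma mul0l w : mul 0 w = 0.
Proof.
have := mul_linl HP (-1) 0 0 w.
by rewrite scaler0 addr0 scaleN1r addNr.
Qed.

Lemma mulQ (R : V -> Prop) b : subspace R -> subspace (fun w => R (mul b w)).
Proof.
move=> [R0 cl]; split; first by rewrite (mul_comm HP) mul0l.
move=> a u v hu hv; rewrite (mul_comm HP) (mul_linl HP).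
by rewrite (mul_comm HP u) (mul_comm HP v); apply: cl.
Qed.

Lemma brS_gen (A B : V -> Prop) x v : A v -> B (x i1) -> brS br A B (br (upd x i0 v)).
Proof.
move=> hA hB; apply: span_sub; exists (upd x i0 v); split; [|split]; last by [].
  by move=> i hi; have -> : i = i0 by apply: val_inj. 
move=> i hi; have -> : i = i1 by apply: val_inj.
by rewrite /upd; have -> : (i1 == i0) = false by rewrite -val_eqE.
Qed.

Lemma prodS_gen (A B : V -> Prop) a b : A a -> B b -> prodS mul A B (mul a b).
Proof. by move=> ha hb; apply: span_sub; exists a, b. Qed.

Lemma rhs_gen k r1 rs S v : (r1 + sumn rs)%N = k -> term mul br I r1 rs = Some S ->
  S v -> rhs mul br I k v.
Proof. by move=> h1 h2 h3; apply: span_sub; exists r1, rs, S. Qed.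

Lemma rhs_sub k : subspace (rhs mul br I k).
Proof. exact: span_subspace. Qed.

Lemma term_rcons r1 rs r : term mul br I r1 (rcons rs r) =
  mulopt mul (term mul br I r1 rs) (if r == 0%N then None else Some (powB br I r)).
Proof. by rewrite /term foldl_rcons. Qed.

Lemma sumn_rcons' (rs : seq nat) r : sumn (rcons rs r) = (sumn rs + r)%N.
Proof. by rewrite -cats1 sumn_cat /= addn0. Qed.

Lemma ML r m w b : (1 <= r)%N -> powB br I r b -> rhs mul br I m w ->
  rhs mul br I (m + r) (mul b w).
Proof.
move=> hr hb; move: w; apply: span_ind; first exact: mulQ (rhs_sub _).
move=> w [r1 [rs [S [hs [ht hS]]]]].
rewrite (mul_comm HP).
apply: (@rhs_gen _ r1 (rcons rs r) (prodS mul S (powB br I r))).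
- by rewrite sumn_rcons' addnA hs.
- rewrite term_rcons ht; case: r hr {hb} => //.
- exact: prodS_gen.
Qed.

Lemma LA r1 : forall v x, powA mul I r1.+1 v -> I (x i1) ->
  rhs mul br I r1.+2 (br (upd x i0 v)).
Proof.
elim: r1 => [|r1 IH] v x hv hx.
  apply: (@rhs_gen _ 0 [:: 2%N] (powB br I 2)) => //.
  exact: brS_gen.
move: v hv; apply: span_ind; first exact: brQ (rhs_sub _).
move=> v [a [b [ha [hb ->]]]].
rewrite (br_leibniz HP) //; apply: (sub_add (rhs_sub _)) .
  apply: (@rhs_gen _ r1.+1 [:: 2%N] (prodS mul (powA mul I r1.+1) (powB br I 2))).
  - by rewrite /= addn0 addn2.
  - by [].
  - by apply: prodS_gen => //; apply: brS_gen.
rewrite -addn1; apply: ML => //; exact: IH.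
Qed.

Lemma L rs : forall r1 S v x, term mul br I r1 rs = Some S -> S v -> I (x i1) ->
  rhs mul br I (r1 + sumn rs).+1 (br (upd x i0 v)).
Proof.
elim/last_ind: rs => [|rs r IH] r1 S v x.
  rewrite /term /=; case: r1 => [|r1] //= [<-] hv hx.
  by rewrite addn0; apply: LA.
rewrite term_rcons sumn_rcons'.
case: r => [|r].
  rewrite addn0 /=; case ht: (term mul br I r1 rs) => [T|] //= [<-] hv hx.
  exact: (IH r1 T).
case ht: (term mul br I r1 rs) => [T|] /= [<-] hv hx.
  move: v hv; apply: span_ind; first exact: brQ (rhs_sub _).
  move=> v [a [b [ha [hb ->]]]].
  rewrite (br_leibniz HP) //; apply: (sub_add (rhs_sub _)) .
    apply: (@rhs_gen _ r1 (rcons rs r.+2) (prodS mul T (powB br I r.+2))).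
    - by rewrite sumn_rcons' !addnS addnA.
    - by rewrite term_rcons ht.
    - by apply: prodS_gen => //; apply: brS_gen.
  have -> : (r1 + (sumn rs + r.+1)).+1 = ((r1 + sumn rs).+1 + r.+1)%N.
    by rewrite addSn addnA.
  apply: ML => //; exact: (IH r1 T).
apply: (@rhs_gen _ r1 (rcons rs r.+2) (powB br I r.+2)).
- by rewrite sumn_rcons' !addnS addnA.
- by rewrite term_rcons ht.
- exact: brS_gen.
Qed.

End Aux.

Theorem lemma5p3 (F : fieldType) (V : lmodType F) (n : nat)
  (mul : V -> V -> V) (br : ('I_n -> V) -> V)
  (hn : (2 <= n)%N) (HP : is_poisson_nlie mul br)
  (I : V -> Prop) (HI : ideal mul br I) :
  forall k : nat, (1 <= k)%N ->
    forall v : V, lcs mul br I k v -> rhs mul br I k v.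
Proof.
elim=> [//|k IH] _ v.
case: k IH => [|k] IH.
  move=> hv; apply: (@rhs_gen _ _ _ mul br I 1 1 [::] I) => //.
change (sumS (brS br (lcs mul br I k.+1) I) (prodS mul (lcs mul br I k.+1) I) v
  -> rhs mul br I k.+2 v).
move: v; apply: span_ind; first exact: (rhs_sub mul br I k.+2).
move=> v [|].
  move: v; apply: span_ind; first exact: (rhs_sub mul br I k.+2).
  move=> v [x [h0 [h1 ->]]].
  have -> : x = upd x (i0 hn) (x (i0 hn)).
    by apply: functional_extensionality => i; rewrite /upd; case: eqP => [->|].
  have hx : rhs mul br I k.+1 (x (i0 hn)) by apply: IH => //; apply: h0.
  have hx1 : I (x (i1 hn)) by apply: h1.
  move: (x (i0 hn)) hx; apply: span_ind; first by apply: (brQ HP); apply: rhs_sub.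
  move=> w [r1 [rs [S [hs [ht hS]]]]].
  rewrite -hs; exact: (@L _ _ _ mul br hn HP I rs r1 S w x ht hS hx1).
move: v; apply: span_ind; first exact: (rhs_sub mul br I k.+2).
move=> v [a [b [ha [hb ->]]]].
rewrite (mul_comm HP) -addn1.
apply: (ML HP) => //; exact: IH.
Qed.
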